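(* Let $a\in[0,\infty)$, let $\theta:[0,1]\to[0,\infty]$ be a continuous and decreasing function that is not strictly decreasing, and let $\vartheta:[0,\infty]\to[0,1]$ be a continuous and decreasing function such that $O_{\theta,\vartheta}(x,y)=\vartheta(\theta(x)+\theta(y))$ defines an overlap function on $[0,1]^2$ and at least one of the following holds: (1) $\theta(x)=\frac{a}{2}$ if and only if $x=1$; (2) $\vartheta(x)=1$ if and only if $x\in[0,a]$. Then there do not exist a positive continuous t-norm $T$ and a pseudo automorphism $\mathcal{F}$ such that $O_{\theta,\vartheta}(x,y)=\mathcal{F}(T(x,y))$ for all $(x,y)\in[0,1]^2$.
   Context: ''Decreasing'' means non-increasing and ''increasing'' means non-decreasing. Arithmetic in $[0,\infty]$ uses $c+\infty=\infty$; continuity on $[0,\infty]$ refers to the usual topology of the extended half-line. An overlap function is a map $O:[0,1]^2\to[0,1]$ that is (O1) commutative, (O2) $O(x,y)=0$ iff $xy=0$, (O3) $O(x,y)=1$ iff $xy=1$, (O4) increasing in each variable, (O5) continuous. A t-norm is a commutative, associative map $T:[0,1]^2\to[0,1]$, increasing in each variable, with $T(x,1)=x$; it is positive if $T(x,y)=0$ implies $x=0$ or $y=0$. A pseudo automorphism is a continuous increasing map $\mathcal{F}:[0,1]\to[0,1]$ with $\mathcal{F}(x)=1$ iff $x=1$ and $\mathcal{F}(x)=0$ iff $x=0$. *)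

(* Defs.v *)
From HB Require Import structures.
From mathcomp Require Import all_boot all_order all_algebra.
From mathcomp Require Import all_classical all_reals all_analysis.
Set Implicit Arguments. Unset Strict Implicit. Unset Printing Implicit Defensive.
Import Order.TTheory GRing.Theory Num.Theory.
Import numFieldNormedType.Exports.
Local Open Scope classical_set_scope.
Local Open Scope ring_scope.

Definition I01 {R : realType} : set R := [set x | 0 <= x <= 1].
Definition I01sq {R : realType} : set (R * R) :=
  [set p | I01 p.1 /\ I01 p.2].
Definition EHL {R : realType} : set (\bar R) := [set x | (0 <= x)%E].

Definition is_overlap {R : realType} (O : R -> R -> R) : Prop :=
  (forall x y, I01 x -> I01 y -> I01 (O x y)) /\
  (forall x y, I01 x -> I01 y -> O x y = O y x) /\
  (forall x y, I01 x -> I01 y -> (O x y = 0 <-> x * y = 0)) /\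
  (forall x y, I01 x -> I01 y -> (O x y = 1 <-> x * y = 1)) /\
  (forall x y z, I01 x -> I01 y -> I01 z -> y <= z -> O x y <= O x z) /\
  (forall x y z, I01 x -> I01 y -> I01 z -> y <= z -> O y x <= O z x) /\
  {within I01sq, continuous (fun p : R * R => O p.1 p.2)}.

Definition is_tnorm {R : realType} (T : R -> R -> R) : Prop :=
  (forall x y, I01 x -> I01 y -> I01 (T x y)) /\
  (forall x y, I01 x -> I01 y -> T x y = T y x) /\
  (forall x y z, I01 x -> I01 y -> I01 z -> T x (T y z) = T (T x y) z) /\
  (forall x y z, I01 x -> I01 y -> I01 z -> y <= z -> T x y <= T x z) /\
  (forall x y z, I01 x -> I01 y -> I01 z -> y <= z -> T y x <= T z x) /\
  (forall x, I01 x -> T x 1 = x).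

Definition positive_tnorm {R : realType} (T : R -> R -> R) : Prop :=
  forall x y, I01 x -> I01 y -> T x y = 0 -> x = 0 \/ y = 0.

Definition continuous_on_sq {R : realType} (T : R -> R -> R) : Prop :=
  {within I01sq, continuous (fun p : R * R => T p.1 p.2)}.

Definition is_pseudo_automorphism {R : realType} (F : R -> R) : Prop :=
  [/\ (forall x, I01 x -> I01 (F x)),
      {within I01, continuous F},
      (forall x y, I01 x -> I01 y -> x <= y -> F x <= F y),
      (forall x, I01 x -> (F x = 1 <-> x = 1))
    & (forall x, I01 x -> (F x = 0 <-> x = 0))].

(* Main.v *)
Require Import Defs.
From HB Require Import structures.
From mathcomp Require Import all_boot all_order all_algebra.
From mathcomp Require Import all_classical all_reals all_analysis.
From mathcomp Require Import lra.
Import Order.TTheory GRing.Theory Num.Theory.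
Import numFieldNormedType.Exports.
Local Open Scope classical_set_scope.
Local Open Scope ring_scope.

Lemma within_eps {R : realType} (A : set R) (g : R -> R) (m : R) :
  g @ within A (nbhs m) --> g m -> forall e : R, 0 < e ->
  exists2 d : R, 0 < d & forall x, A x -> `|m - x| < d -> `|g m - g x| < e.
Proof.
move=> gc e e0.
have H := @cvgr_dist_lt _ _ _ (within A (nbhs m)) (@within_filter _ A (nbhs m) (nbhs_filter m)) g (g m) gc e e0.
rewrite near_withinE in H.
have [d /= d0 {}H] := (nbhs_ballP m _).1 H. exists d => // x Ax mx.
by apply: H.
Qed.

Lemma within_at {T U : topologicalType} (A : set T) (f : T -> U) x :
  {within A, continuous f} -> A x -> f @ within A (nbhs x) --> f x.
Proof.
move=> c Ax; have := c x; rewrite /continuous_at.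
by case: (nbhs_subspaceP A x).
Qed.

Lemma within_of {T U : topologicalType} (A : set T) (f : T -> U) :
  (forall x, A x -> f @ within A (nbhs x) --> f x) -> {within A, continuous f}.
Proof.
move=> H; rewrite continuous_subspace_in => x; rewrite inE => Ax.
rewrite /continuous_at /prop_for /=.
case: (nbhs_subspaceP A x) => // _; exact: H.
Qed.

Lemma slice_cont {R : realType} (T : R -> R -> R) q :
  continuous_on_sq T -> I01 q -> {within `[0, 1], continuous (fun z => T q z)}.
Proof.
move=> cT Iq; apply: within_of => z /= zI.
have Isq : I01sq (q, z) by split.
have h := @within_at _ _ I01sq (fun p : R * R => T p.1 p.2) (q, z) cT Isq.
have hp : (fun y => (q, y)) @ within `[0, 1] (nbhs z) --> within I01sq (nbhs (q, z)).
  move=> P HP.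
  change (nbhs (q, z) (fun p => I01sq p -> P p)) in HP.
  change (nbhs z (fun y => `[0, 1]%classic y -> P (q, y))).
  have hc : (fun y => (q, y)) @ nbhs z --> (q, z).
    exact: (cvg_pair (cvg_cst q) cvg_id).
  have := hc (fun p => I01sq p -> P p) HP => H0. apply: (@filterS _ _ (nbhs_filter z) _ _ _ H0) => y /= Hy yI.
  by apply: Hy; split.
exact: (cvg_comp _ _ hp h).
Qed.

Theorem proposition5p2 (R : realType) (a : R) (theta : R -> \bar R)
    (vtheta : \bar R -> R) :
  0 <= a ->
  (forall x, I01 x -> EHL (theta x)) ->
  {within I01, continuous theta} ->
  (forall x y, I01 x -> I01 y -> x <= y -> (theta y <= theta x)%E) ->
  ~ (forall x y, I01 x -> I01 y -> x < y -> (theta y < theta x)%E) ->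
  (forall u, EHL u -> I01 (vtheta u)) ->
  {within EHL, continuous vtheta} ->
  (forall u v, EHL u -> EHL v -> (u <= v)%E -> vtheta v <= vtheta u) ->
  is_overlap (fun x y => vtheta (theta x + theta y)%E) ->
  ((forall x, I01 x -> (theta x = (a / 2)%:E <-> x = 1)) \/
   (forall u, EHL u -> (vtheta u = 1 <-> (u <= a%:E)%E))) ->
  ~ (exists (T : R -> R -> R) (F : R -> R),
       [/\ is_tnorm T, positive_tnorm T, continuous_on_sq T,
           is_pseudo_automorphism F
         & forall x y, I01 x -> I01 y ->
             vtheta (theta x + theta y)%E = F (T x y)]).
Proof.
move=> a0 thEHL cth thdec nstrict vI cv vdec Ov cond.
move=> [T [F [[TI [Tc [Ta [Tm1 [Tm2 T1]]]]] Tpos Tcont [FI Fc Fm F1 F0] OFT]]].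
case: Ov => [OI [Oc [hO2 [hO3 [hO4 [hO4b hO5]]]]]].
pose O x y := vtheta (theta x + theta y)%E.
have I0 : I01 (0 : R) by rewrite /I01 /= lexx ler01.
have I1 : I01 (1 : R) by rewrite /I01 /= lexx ler01.
have Ipos : forall x : R, 0 < x <= 1 -> I01 x.
  by move=> x /andP [x0 x1]; rewrite /I01 /= x1 ltW.
have FO : forall x, I01 x -> F x = O x 1.
  by move=> x Ix; rewrite /O OFT // T1.
pose th x := fine (theta x).
have fin : forall x, 0 < x <= 1 -> theta x = (th x)%:E.
  move=> x /[dup] /Ipos Ix /andP [x0 x1].
  have h0 := thEHL x Ix.
  have ninf : theta x != +oo%E.
    apply/negP => /eqP thx.
    have th0 : theta 0 = +oo%E.
      apply/eqP; rewrite -leye_eq -thx; apply: thdec => //; exact: ltW.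
    have h1 : (0 <= theta 1%R)%E := thEHL 1%R I1.
    have : O x 1 = O 0 1.
      rewrite /O thx th0 !addye //; apply/negP => /eqP h; rewrite h in h1; done.
    have -> : O 0 1 = 0 by apply/(hO2 0 1 I0 I1); rewrite mul0r.
    move/(hO2 x 1 Ix I1); rewrite mulr1 => x00.
    by move: x0; rewrite x00 ltxx.
  rewrite /th fineK // ge0_fin_numE //.
  by rewrite lt_neqAle ninf leey.
have th0 : forall x, 0 < x <= 1 -> 0 <= th x.
  move=> x hx; have := thEHL x (Ipos x hx); by rewrite fin // lee_fin.
have thmon : forall x y, 0 < x -> x <= y -> y <= 1 -> th y <= th x.
  move=> x y x0 xy y1.
  have hx : 0 < x <= 1 by rewrite x0 (le_trans xy y1).
  have hy : 0 < y <= 1 by rewrite y1 (lt_le_trans x0 xy).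
  have := thdec x y (Ipos x hx) (Ipos y hy) xy; by rewrite (fin x hx) (fin y hy) lee_fin.
pose W (s : R) := vtheta s%:E.
have OW : forall x y, 0 < x <= 1 -> 0 < y <= 1 -> O x y = W (th x + th y).
  by move=> x y hx hy; rewrite /O /W (fin x hx) (fin y hy) EFinD.
have Wdec : forall s t, 0 <= s -> s <= t -> W t <= W s.
  move=> s t s0 st; apply: vdec; rewrite /EHL /= ?lee_fin //; exact: (le_trans s0 st).
pose b := th 1.
have h11 : 0 < (1 : R) <= 1 by rewrite ltr01 lexx.
have [x0 [y0 [Ix0 [Iy0 [xy0 nlt]]]]] : exists x0 y0, I01 x0 /\ I01 y0 /\ x0 < y0 /\
    ~ (theta y0 < theta x0)%E.
  apply: contrapT => H; apply: nstrict => x y Ix Iy xy; apply: contrapT => nl.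
  by apply: H; exists x, y.
have eqxy : theta y0 = theta x0.
  move: (thdec x0 y0 Ix0 Iy0 (ltW xy0)); rewrite le_eqVlt => /orP [/eqP //|h].
  by exfalso; apply: nlt.
move: Ix0 Iy0; rewrite /I01 /= => /andP [x00 x01] /andP [y00 y01].
pose q := y0; pose p := (x0 + y0) / 2.
have p0 : 0 < p by rewrite /p; lra.
have pq : p < q by rewrite /p /q; lra.
have q1 : q <= 1 by [].
have Ip : I01 p by apply: Ipos; rewrite p0 /=; lra.
have Iq : I01 q by apply: Ipos; apply/andP; split; lra.
have thpq : theta p = theta q.
  apply: le_anti; apply/andP; split.
    rewrite /q eqxy; apply: thdec => //; rewrite /I01 /= ?x00 ?x01 //; rewrite /p; lra.
  by apply: thdec => //; exact: ltW.
have Opz : forall z, O p z = O q z by move=> z; rewrite /O thpq.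
have Tq0 : T q 0 = 0.
  apply: le_anti; apply/andP; split.
    have := Tm2 0 q 1 I0 Iq I1 q1; by rewrite (Tc 1 0) // T1.
  by have := TI q 0 Iq I0; rewrite /I01 /= => /andP [].
have Tq1 : T q 1 = q by rewrite T1.
have ivt : forall v, 0 <= v <= q -> exists2 z, z \in `[0, 1] & T q z = v.
  move=> v hv; apply: IVT; first exact: ler01.
    exact: slice_cont.
  rewrite Tq0 Tq1; move: hv => /andP [hv1 hv2].
  have q0 : 0 <= q by lra.
  by rewrite (min_idPl q0) (max_idPr q0) hv1 hv2.

have q0 : 0 < q by lra.
have hp : 0 <= p <= q by apply/andP; split; lra.
have [y yI Tqy] := ivt p hp.
move: yI; rewrite in_itv /= => /andP [y0' y1'].
have Iy : I01 y by rewrite /I01 /= y0' y1'.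
have yn1 : y != 1.
  by apply/eqP => ey; move: Tqy; rewrite ey Tq1 => eqp; move: pq; rewrite eqp ltxx.
have yn0 : y != 0.
  by apply/eqP => ey; move: Tqy; rewrite ey Tq0 => eqp; move: p0; rewrite -eqp ltxx.
have ypos : 0 < y by rewrite lt_neqAle eq_sym yn0 y0'.
have ylt1 : y < 1 by rewrite lt_neqAle yn1 y1'.
have hy : 0 < y <= 1 by rewrite ypos y1'.
pose d := th y - b.
have dpos : 0 < d.
  have hb : b <= th y by apply: thmon => //; exact: ltW.
  rewrite /d subr_gt0 lt_neqAle hb andbT; apply/negP => /eqP eb.
  have : O y 1 = O 1 1 by rewrite !OW // -eb.
  have -> : O 1 1 = 1 by apply/(hO3 1 1 I1 I1); rewrite mulr1.
  by move/(hO3 y 1 Iy I1); rewrite mulr1 => ey; move: yn1; rewrite ey eqxx.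
have C : forall x, 0 < x <= q -> W (th x + th y) = W (th x + b).
  move=> x /andP [xp xq].
  have hx : 0 < x <= 1 by rewrite xp (le_trans xq q1).
  have Ix := Ipos x hx.
  have [z zI Tqz] := ivt x (introT andP (conj (ltW xp) xq)).
  move: zI; rewrite in_itv /= => /andP [z0 z1].
  have Iz : I01 z by rewrite /I01 /= z0 z1.
  rewrite -!OW //.
  have -> : O x y = F (T x y) by rewrite /O OFT.
  have -> : O x 1 = F x by rewrite FO.
  have Tqz' := TI q z Iq Iz.
  have -> : T x y = T p z.
    by rewrite -Tqz -Ta // (Tc z y) // Ta // Tqy.
  by rewrite -OFT // -/(O p z) Opz /O OFT // Tqz.
have C' : forall x, 0 < x <= q -> forall s, th x + b <= s <= th x + b + d ->
    W s = W (th x + b).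
  move=> x hxq s /andP [s1 s2].
  have hx : 0 < x <= 1 by move: hxq => /andP [xp xq]; rewrite xp (le_trans xq q1).
  have hb0 : 0 <= th x + b by rewrite addr_ge0 // th0.
  apply: le_anti; apply/andP; split; first exact: Wdec.
  rewrite -(C x hxq).
  have -> : th x + th y = th x + b + d by rewrite /d; lra.
  by apply: Wdec => //; exact: (le_trans hb0 s1).
have FW : forall x, 0 < x <= 1 -> F x = W (th x + b).
  by move=> x hx; rewrite FO ?OW //; exact: Ipos.
have hq : 0 < q <= 1 by rewrite q0 q1.
have Fq0 : 0 < F q.
  rewrite lt_neqAle; have := FI q Iq; rewrite /I01 /= => /andP [-> _]; rewrite andbT.
  by apply/negP => /eqP /esym /(F0 q Iq) qz; move: q0; rewrite qz ltxx.
have [eta eta0 Heta] := @within_eps _ I01 F 0 (@within_at _ _ I01 F 0 Fc I0) _ Fq0.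
have F00 : F 0 = 0 by apply/(F0 0 I0).
pose S := [set x : R | 0 < x <= q /\ F x = F q].
have Sq : S q by rewrite /S /=; split => //; rewrite q0 lexx.
have lbS : lbound S eta.
  move=> x [/andP [xp xq] Fx]; rewrite leNgt; apply/negP => xe.
  have hx : 0 < x <= 1 by rewrite xp (le_trans xq q1).
  have := Heta x (Ipos x hx); rewrite F00 sub0r normrN (gtr0_norm xp) => /(_ xe).
  rewrite Fx sub0r normrN ger0_norm ?ltxx //; exact: ltW.
have neS : S !=set0 by exists q.
have hlS : has_lbound S by exists eta.
pose m := inf S.
have mge : eta <= m by apply: lb_le_inf.
have mle : m <= q by apply: ge_inf.
have hm : 0 < m <= 1 by apply/andP; split; lra.
have Im := Ipos m hm.
have hth := @within_at _ _ I01 theta m cth Im.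
rewrite (fin m hm) in hth.
have hfth := @fine_cvg _ _ _ (@within_filter _ I01 (nbhs m) (nbhs_filter m)) _ _ hth.
have d2 : 0 < d / 2 by lra.
have [dd dd0 Hdd] := @within_eps _ I01 (fine \o theta) m hfth _ d2.
have [x1 Sx1 x1lt] := inf_adherent dd0 (conj neS hlS).
have mx1 : m <= x1 by apply: ge_inf.
case: Sx1 => /andP [x1p x1q] Fx1.
have hx1 : 0 < x1 <= 1 by rewrite x1p (le_trans x1q q1).
pose x0' := m - Num.min (dd / 2) (m / 2).
have e1 : Num.min (dd / 2) (m / 2) <= dd / 2 by rewrite ge_min lexx.
have e2 : Num.min (dd / 2) (m / 2) <= m / 2 by rewrite ge_min lexx orbT.
have e3 : 0 < Num.min (dd / 2) (m / 2) by rewrite lt_min; apply/andP; split; lra.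
have hx0 : 0 < x0' <= 1 by apply/andP; split; rewrite /x0'; lra.
have A1 := Hdd x1 (Ipos x1 hx1).
have A0 := Hdd x0' (Ipos x0' hx0).
have B1 : `|m - x1| < dd by rewrite ltr_norml; apply/andP; split; lra.
have B0 : `|m - x0'| < dd by rewrite ltr_norml; apply/andP; split; rewrite /x0'; lra.
move: (A1 B1) (A0 B0); rewrite /= !ltr_norml => /andP [a1 a2] /andP [a3 a4].
have mon : th x1 <= th x0' by apply: thmon; rewrite /x0' //; lra.
have : S x0'.
  split; first by apply/andP; split; rewrite /x0'; lra.
  rewrite FW // -Fx1 FW //; apply: C'; first by rewrite x1p x1q.
  rewrite /th /= in a1 a2 a3 a4 mon *.
  apply/andP; split; lra.
move/ge_inf => /(_ hlS); rewrite -/m /x0'; lra.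
Qed.
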